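(* Let $k\in\mathbb{N}_0$ and $f(s)=(s-1/2-k)\,\Gamma(1/2-s)$. Then for every $j\in\mathbb{N}$, \[ \lim_{s\to 1/2+k}f^{(j)}(s)=(-1)^{k+j-1}\,j!\sum_{\ell_1+\ell_2+\dots+\ell_{k+1}=j}\frac{\Gamma^{(\ell_{k+1})}(1)}{\ell_{k+1}!}\prod_{i=1}^{k}(k-i+1)^{-(\ell_i+1)}. \]
   Context: $f^{(j)}$ and $\Gamma^{(\ell)}$ denote derivatives; the sum ranges over tuples $(\ell_1,\dots,\ell_{k+1})$ of nonnegative integers with sum $j$; empty products equal $1$. *)

(* Defs.v *)
From Stdlib Require Import Reals List Factorial.
From Coquelicot Require Import Coquelicot.
Import ListNotations.
Open Scope R_scope.

(* Euler's integral, used for x > 0:  Gamma(x) = int_0^oo t^(x-1) e^(-t) dt. *)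
Definition Gamma_pos (x : R) : R :=
  RInt_gen (fun t => Rpower t (x - 1) * exp (- t)) (at_right 0) (Rbar_locally p_infty).

Definition rising (x : R) (n : nat) : R :=
  fold_right Rmult 1 (map (fun i => x + INR i) (seq 0 n)).

(* The Gamma function on R, meromorphically continued through the functional
   equation Gamma(x) = Gamma(x+n) / (x (x+1) ... (x+n-1)), with n chosen so
   that x + n > 0.  At the poles (x in {0,-1,-2,...}) the value is junk. *)
Definition Gamma (x : R) : R :=
  let n := Z.to_nat (up (- x)) in Gamma_pos (x + INR n) / rising x n.

(* compositions m j = list of all tuples (l_1,...,l_m) of nonnegative
   integers with l_1 + ... + l_m = j (each exactly once). *)
Fixpoint compositions (m j : nat) : list (list nat) :=
  match m with
  | O => if Nat.eqb j 0 then [nil] else nil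
  | S m' => flat_map (fun a => map (cons a) (compositions m' (j - a))) (seq 0 (S j))
  end.

Definition sumR (l : list R) : R := fold_right Rplus 0 l.
Definition prodR (l : list R) : R := fold_right Rmult 1 l.

(* Summand for a tuple l = [l_1; ...; l_{k+1}]:
   Gamma^(l_{k+1})(1) / l_{k+1}! * prod_{i=1}^k (k-i+1)^(-(l_i+1)). *)
Definition lemma3_term (k : nat) (l : list nat) : R :=
  Derive_n Gamma (nth k l O) 1 / INR (fact (nth k l O)) *
  prodR (map (fun i => / (INR (k - i + 1)) ^ (S (nth (i - 1) l O))) (seq 1 k)).

Definition lemma3_rhs (k j : nat) : R :=
  (-1) ^ (k + j - 1) * INR (fact j) * sumR (map (lemma3_term k) (compositions (S k) j)).

(* Main.v *)
Require Import Defs.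
From Stdlib Require Import Reals List.
From Coquelicot Require Import Coquelicot.
From Stdlib Require Import Lra Lia Factorial ZArith.
Import ListNotations.
Open Scope R_scope.

Lemma pow_le_fact_exp m x : 0 <= x -> x ^ m <= INR (fact m) * exp x.
Proof.
  intros Hx. pose proof (exp_ge_taylor x m Hx) as H.
  assert (Hs : x ^ m / INR (fact m) <= sum_f_R0 (fun k => x ^ k / INR (fact k)) m).
  { destruct m; simpl; [lra|].
    assert (0 <= sum_f_R0 (fun k => x ^ k / INR (fact k)) m).
    { apply cond_pos_sum. intros n. apply Rmult_le_pos; [apply pow_le; lra|].
      apply Rlt_le, Rinv_0_lt_compat, INR_fact_lt_0. }
    lra. }
  pose proof (INR_fact_lt_0 m).
  assert (x ^ m / INR (fact m) <= exp x) by lra.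
  apply Rmult_le_reg_r with (/ INR (fact m)). apply Rinv_0_lt_compat; lra.
  replace (INR (fact m) * exp x * / INR (fact m)) with (exp x) by (field; lra).
  exact H1.
Qed.

Lemma expm1_bound v : 0 <= exp v - 1 - v <= v ^ 2 * exp (Rabs v).
Proof.
  split. pose proof (exp_ineq1_le v); lra.
  destruct (Rle_dec 0 v) as [Hv|Hv].
  - rewrite Rabs_right by lra.
    destruct (Rle_dec 1 v).
    + assert (1 <= v^2) by nra. pose proof (exp_pos v). nra.
    + pose proof (exp_ineq1_le (-v)). rewrite exp_Ropp in H.
      pose proof (exp_pos v).
      assert (exp v * (1 - v) <= 1).
      { apply Rmult_le_reg_r with (/ exp v). apply Rinv_0_lt_compat; lra.
        field_simplify; try lra. }
      nra.
  - rewrite Rabs_left by lra.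
    set (w := - v). assert (Hw : 0 < w) by (unfold w; lra).
    replace v with (- w) by (unfold w; lra).
    pose proof (exp_ineq1_le w). rewrite exp_Ropp.
    assert (/ exp w <= / (1 + w)). { apply Rinv_le_contravar; lra. }
    assert (/ (1 + w) - 1 + w <= w ^ 2).
    { replace (/ (1 + w) - 1 + w) with (w ^ 2 / (1 + w)) by (field; lra).
      apply Rmult_le_reg_r with (1 + w). lra.
      field_simplify; try lra. nra. }
    assert (w ^ 2 <= w ^ 2 * exp w). { assert (1 <= exp w) by lra. nra. }
    lra.
Qed.

Notation Fa := (at_right 0).
Notation Fb := (Rbar_locally p_infty).

Lemma ball_R x e y : ball x e y <-> Rabs (y - x) < e.
Proof. unfold ball; simpl; unfold AbsRing_ball, abs, minus, plus, opp; simpl. tauto. Qed.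

Lemma FP_pos : filter_prod Fa Fb (fun ab => 0 < fst ab < 1 /\ 1 < snd ab).
Proof.
  apply Filter_prod with (fun a => 0 < a < 1) (fun b => 1 < b).
  - exists (mkposreal 1 Rlt_0_1). intros y Hy Hy0. apply ball_R in Hy. simpl in Hy.
    apply Rabs_def2 in Hy. unfold minus, plus, opp in Hy; simpl in Hy. lra.
  - exists 1. auto.
  - simpl. auto.
Qed.

Lemma exR (g : R -> R) u v : 0 < u -> 0 < v -> (forall t, 0 < t -> continuous g t) -> ex_RInt g u v.
Proof.
  intros Hu Hv Hc. apply (@ex_RInt_continuous R_CompleteNormedModule). intros z Hz. apply Hc.
  assert (0 < Rmin u v) by (apply Rmin_glb_lt; auto). lra.
Qed.

Lemma Chasles_R (g : R -> R) a b c : ex_RInt g a b -> ex_RInt g b c ->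
  RInt g a b + RInt g b c = RInt g a c.
Proof. intros. apply (@RInt_Chasles R_CompleteNormedModule); auto. Qed.

Lemma pm1 (u v : R) : u = u + v - v. Proof. ring. Qed.
Lemma pm2 (u v : R) : v = u + v - u. Proof. ring. Qed.

Lemma RInt_cmp (f D : R -> R) u v : 0 < u -> 0 < v ->
  (forall t, 0 < t -> continuous f t) -> (forall t, 0 < t -> continuous D t) ->
  (forall t, 0 < t -> Rabs (f t) <= D t) ->
  Rabs (RInt f u v) <= Rabs (RInt D u v).
Proof.
  intros Hu Hv Hf HD Hb.
  assert (K : forall u v, 0 < u -> 0 < v -> u <= v -> Rabs (RInt f u v) <= Rabs (RInt D u v)).
  { clear u v Hu Hv. intros u v Hu Hv Huv.
    eapply Rle_trans. apply abs_RInt_le; auto. apply exR; auto.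
    apply Rle_trans with (RInt D u v). apply RInt_le; auto.
    apply exR; auto. intros; apply continuous_Rabs_comp, Hf; auto.
    apply exR; auto.
    intros x Hx. apply Hb. lra.
    apply Rle_abs. }
  destruct (Rle_dec u v). auto.
  rewrite <- (opp_RInt_swap f), <- (opp_RInt_swap D) by (apply exR; auto).
  unfold opp; simpl. rewrite !Rabs_Ropp. apply K; auto. lra.
Qed.

Lemma RInt_gen_cmp (f D : R -> R) LD :
  (forall t, 0 < t -> continuous f t) -> (forall t, 0 < t -> continuous D t) ->
  (forall t, 0 < t -> Rabs (f t) <= D t) ->
  is_RInt_gen D Fa Fb LD -> ex_RInt_gen f Fa Fb.
Proof.
  intros Hf HD Hb HLD.
  set (I := fun ab : R * R => RInt f (fst ab) (snd ab)).
  set (F := filter_prod Fa Fb).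
  assert (PF : ProperFilter F).
  { apply filter_prod_proper. }
  assert (HJ : forall eps : posreal, F (fun ab => Rabs (RInt D (fst ab) (snd ab) - LD) < eps
                                       /\ (0 < fst ab < 1 /\ 1 < snd ab))).
  { intros eps. apply filter_and; [|apply FP_pos].
    assert (H := HLD (ball LD eps) (locally_ball LD eps)).
    unfold filtermapi in H. apply filter_and with (1 := FP_pos) in H.
    eapply filter_imp; [|exact H]. intros [a b] [Hp [y [Hy1 Hy2]]]. simpl in *.
    apply (@is_RInt_unique R_CompleteNormedModule) in Hy1. rewrite Hy1. apply ball_R. auto. }
  assert (Hc : cauchy (filtermap I F)).
  { intros eps.
    assert (eps4 : 0 < eps / 4) by (destruct eps; simpl; lra).
    destruct (HJ (mkposreal _ eps4)) as [P Q HP HQ HPQ].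
    destruct (at_right_proper_filter 0) as [exA _].
    destruct (Rbar_locally_filter p_infty) as [exB _].
    destruct (exA P HP) as [a0 Ha0]. destruct (exB Q HQ) as [b0 Hb0].
    exists (I (a0, b0)). unfold filtermap.
    apply Filter_prod with P Q; auto. intros a b Ha Hb'.
    apply ball_R. unfold I; simpl.
    destruct (HPQ a b Ha Hb') as [H1 [[Ha1 Ha2] Hb1]].
    destruct (HPQ a0 b Ha0 Hb') as [H2 [[Ha3 Ha4] _]].
    destruct (HPQ a0 b0 Ha0 Hb0) as [H3 [_ Hb2]]. simpl in *.
    assert (E : forall g, (forall t, 0 < t -> continuous g t) ->
       RInt g a b - RInt g a0 b0 = RInt g a a0 + RInt g b0 b :> R).
    { intros g Hg. rewrite <- (Chasles_R g a a0 b) by (apply exR; auto; lra).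
      rewrite <- (Chasles_R g a0 b0 b) by (apply exR; auto; lra).
      ring. }
    assert (E1 : RInt D a a0 = RInt D a b - RInt D a0 b :> R).
    { rewrite <- (Chasles_R D a a0 b) by (apply exR; auto; lra). apply pm1. }
    assert (E2 : RInt D b0 b = RInt D a0 b - RInt D a0 b0 :> R).
    { rewrite <- (Chasles_R D a0 b0 b) by (apply exR; auto; lra). apply pm2. }
    rewrite E by auto.
    pose proof (RInt_cmp f D a a0 ltac:(lra) ltac:(lra) Hf HD Hb).
    pose proof (RInt_cmp f D b0 b ltac:(lra) ltac:(lra) Hf HD Hb).
    rewrite E1 in H. rewrite E2 in H0.
    eapply Rle_lt_trans. apply Rabs_triang.
    apply Rabs_def2 in H1. apply Rabs_def2 in H2. apply Rabs_def2 in H3.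
    assert (Rabs (RInt D a b - RInt D a0 b) < eps / 2) by (apply Rabs_def1; lra).
    assert (Rabs (RInt D a0 b - RInt D a0 b0) < eps / 2) by (apply Rabs_def1; lra).
    lra. }
  pose proof (complete_cauchy (filtermap I F) (filtermap_proper_filter _ _ I F PF) Hc) as HL.
  exists (lim (filtermap I F)).
  intros P [eps HP]. unfold filtermapi.
  apply filter_imp with (fun ab => ball (lim (filtermap I F)) eps (I ab) /\ (0 < fst ab < 1 /\ 1 < snd ab)).
  - intros [a b] [H1 H2]. exists (I (a, b)). split; auto.
    unfold I; simpl. apply (@RInt_correct R_CompleteNormedModule). simpl in H2. apply exR; auto; lra.
  - apply filter_and. apply HL. apply FP_pos.
Qed.

Lemma exp_le_mono x y : x <= y -> exp x <= exp y.
Proof. intros [H|H]. apply Rlt_le, exp_increasing; auto. subst; lra. Qed.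

Definition Dom (b t : R) : R := exp ((b - 1) * ln t) / (1 + exp (b * ln t)) ^ 2.

Lemma bound_neg b m L : 0 < b -> L <= 0 ->
  exp (b * L) * Rabs L ^ m <= INR (fact m) / b ^ m.
Proof.
  intros Hb HL. set (u := - L).
  rewrite Rabs_left1 by lra. fold u.
  replace (b * L) with (- (b * u)) by (unfold u; ring).
  pose proof (pow_le_fact_exp m (b * u) ltac:(unfold u; nra)) as H.
  rewrite Rpow_mult_distr in H.
  assert (0 < b ^ m) by (apply pow_lt; auto).
  rewrite exp_Ropp.
  pose proof (exp_pos (b*u)).
  apply Rmult_le_reg_r with (b ^ m * exp (b * u)). nra.
  field_simplify; try lra.
Qed.

Lemma pow_exp_nat N L : exp (INR N * L) = exp L ^ N.
Proof.
  induction N. simpl. rewrite Rmult_0_l, exp_0. auto.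
  rewrite S_INR. replace ((INR N + 1) * L) with (INR N * L + L) by ring.
  rewrite exp_plus, IHN. simpl. ring.
Qed.

Lemma bound_pos c m : exists K, forall L', 0 <= L' ->
  exp (c * L') * L' ^ m * exp (- exp L') <= K.
Proof.
  destruct (INR_unbounded c) as [N HN].
  exists (INR (fact (N + m))). intros L HL.
  set (t := exp L). assert (Ht : 1 <= t) by (unfold t; pose proof (exp_ineq1_le L); lra).
  assert (H1 : exp (c * L) <= t ^ N).
  { unfold t. rewrite <- pow_exp_nat. apply exp_le_mono. nra. }
  assert (H2 : L ^ m <= t ^ m).
  { apply pow_incr. split; auto. unfold t; pose proof (exp_ineq1_le L); lra. }
  pose proof (pow_le_fact_exp (N + m) t ltac:(lra)) as H3.
  rewrite pow_add in H3.
  rewrite exp_Ropp. fold t.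
  assert (0 < exp t) by apply exp_pos.
  assert (0 <= L ^ m) by (apply pow_le; auto).
  assert (0 < exp (c * L)) by apply exp_pos.
  assert (0 <= t ^ N) by (apply pow_le; lra).
  apply Rmult_le_reg_r with (exp t). auto.
  rewrite Rmult_assoc, Rinv_l by lra. rewrite Rmult_1_r.
  eapply Rle_trans; [|exact H3].
  apply Rmult_le_compat; auto. lra.
Qed.

Lemma le_div_helper A X Y C : 0 < Y -> A * Y <= C * X -> A <= C * (X / Y).
Proof. intros. apply Rmult_le_reg_r with Y; auto. replace (C*(X/Y)*Y) with (C*X) by (field; lra). auto. Qed.

Lemma Dom_bound a m : 0 < a -> exists C, 0 < C /\ forall t, 0 < t ->
  exp ((a - 1) * ln t) * Rabs (ln t) ^ m * exp (- t) <= C * Dom (a / 2) t.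
Proof.
  intros Ha. set (b := a / 2). assert (Hb : 0 < b) by (unfold b; lra).
  destruct (bound_pos (3 * b) m) as [K2 HK2].
  set (K1 := INR (fact m) / b ^ m).
  assert (HK1 : 0 <= K1).
  { unfold K1. apply Rmult_le_pos. apply pos_INR. apply Rlt_le, Rinv_0_lt_compat, pow_lt; auto. }
  assert (HK2' : 0 <= K2).
  { eapply Rle_trans; [|apply (HK2 1); lra].
    pose proof (exp_pos (3 * b * 1)). pose proof (exp_pos (- exp 1)).
    rewrite pow1. nra. }
  exists (4 * (K1 + K2) + 1). split. lra.
  intros t Ht. set (L := ln t).
  assert (Et : t = exp L) by (unfold L; rewrite exp_ln; auto).
  unfold Dom. fold L.
  assert (Hp : 0 < exp (b * L)) by apply exp_pos.
  assert (Hq : 0 < exp ((b - 1) * L)) by apply exp_pos.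
  assert (Ea : exp ((a - 1) * L) = exp ((b - 1) * L) * exp (b * L)).
  { rewrite <- exp_plus. f_equal. unfold b. field. }
  assert (HG0 : 0 <= exp ((a - 1) * L) * Rabs L ^ m * exp (- t)).
  { apply Rmult_le_pos; [apply Rmult_le_pos|]; try (apply Rlt_le, exp_pos).
    apply pow_le, Rabs_pos. }
  assert (Hden : 0 < (1 + exp (b * L)) ^ 2) by (apply pow_lt; lra).
  destruct (Rle_dec L 0) as [HL|HL].
  - pose proof (bound_neg b m L Hb HL) as H. fold K1 in H.
    assert (exp (b * L) <= 1). { rewrite <- exp_0. apply exp_le_mono. nra. }
    assert ((1 + exp (b * L)) ^ 2 <= 4) by nra.
    assert (exp (- t) <= 1). { rewrite <- exp_0. apply exp_le_mono. lra. }
    assert (G1 : exp ((a - 1) * L) * Rabs L ^ m * exp (- t) <= exp ((b - 1) * L) * K1).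
    { rewrite Ea. assert (0 <= Rabs L ^ m) by (apply pow_le, Rabs_pos).
      assert (0 <= exp (- t)) by (apply Rlt_le, exp_pos).
      replace (exp ((b - 1) * L) * exp (b * L) * Rabs L ^ m * exp (- t))
        with (exp ((b - 1) * L) * (exp (b * L) * Rabs L ^ m) * exp (- t)) by ring.
      apply Rle_trans with (exp ((b - 1) * L) * (exp (b * L) * Rabs L ^ m) * 1).
      apply Rmult_le_compat_l; auto. apply Rmult_le_pos; [lra|]. apply Rmult_le_pos; lra.
      rewrite Rmult_1_r. apply Rmult_le_compat_l; lra. }
    apply Rle_trans with (exp ((b - 1) * L) * K1); auto.
    apply le_div_helper. auto.
    apply Rle_trans with (exp ((b - 1) * L) * K1 * 4). nra.
    assert (exp ((b-1)*L) * K1 * 4 <= exp ((b-1)*L) * (4 * (K1 + K2))) by nra.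
    nra.
  - assert (HL' : 0 <= L) by lra.
    pose proof (HK2 L HL') as H. rewrite <- Et in H.
    assert (1 <= exp (b * L)). { rewrite <- exp_0. apply exp_le_mono. nra. }
    assert ((1 + exp (b * L)) ^ 2 <= 4 * exp (b * L) ^ 2) by nra.
    set (E := exp ((b - 1) * L - 2 * (b * L))).
    assert (HE : 0 < E) by apply exp_pos.
    assert (E1 : exp ((b - 1) * L) = E * exp (b * L) ^ 2).
    { unfold E. simpl. rewrite Rmult_1_r, <- !exp_plus. f_equal. ring. }
    assert (E2 : exp ((a - 1) * L) = E * exp (3 * b * L)).
    { unfold E. rewrite <- exp_plus. f_equal. unfold b. field. }
    rewrite Rabs_right by lra. rewrite E2.
    assert (G1 : E * exp (3 * b * L) * L ^ m * exp (- t) <= E * K2).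
    { replace (E * exp (3 * b * L) * L ^ m * exp (- t)) with (E * (exp (3 * b * L) * L ^ m * exp (- t))) by ring.
      apply Rmult_le_compat_l; lra. }
    apply Rle_trans with (E * K2); auto.
    rewrite E1.
    apply le_div_helper. auto.
    assert (E * K2 * (1 + exp (b * L)) ^ 2 <= E * K2 * (4 * exp (b * L) ^ 2)).
    { apply Rmult_le_compat_l; auto. nra. }
    assert (0 <= exp (b * L) ^ 2) by (apply pow_le; lra).
    assert (E * K2 * (4 * exp (b * L) ^ 2) <= (4 * (K1 + K2) + 1) * (E * exp (b * L) ^ 2)).
    { assert (0 <= E * exp (b * L) ^ 2) by nra. nra. }
    lra.
Qed.

Definition hD (b t : R) : R := - / (b * (1 + exp (b * ln t))).

Lemma exp_ln_shift c t : 0 < t -> exp ((c - 1) * ln t) = exp (c * ln t) / t.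
Proof.
  intros Ht. replace ((c - 1) * ln t) with (c * ln t + - ln t) by ring.
  rewrite exp_plus, exp_Ropp, exp_ln by auto. reflexivity.
Qed.

Lemma hD_derive b t : 0 < b -> 0 < t -> is_derive (hD b) t (Dom b t).
Proof.
  intros Hb Ht. unfold hD, Dom.
  assert (Hp : 0 < exp (b * ln t)) by apply exp_pos.
  auto_derive.
  - repeat split; auto. apply Rgt_not_eq. apply Rmult_lt_0_compat; lra.
  - rewrite exp_ln_shift by auto. field. repeat split; lra.
Qed.

Lemma Dom_cont b t : 0 < b -> 0 < t -> continuous (Dom b) t.
Proof.
  intros Hb Ht. apply (@ex_derive_continuous R_AbsRing R_NormedModule). unfold Dom.
  assert (Hp : 0 < exp (b * ln t)) by apply exp_pos.
  auto_derive. repeat split; auto. apply Rgt_not_eq; nra.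
Qed.

Lemma Dom_pos b t : 0 <= Dom b t.
Proof.
  unfold Dom. apply Rmult_le_pos. apply Rlt_le, exp_pos.
  apply Rlt_le, Rinv_0_lt_compat, pow_lt. pose proof (exp_pos (b * ln t)); lra.
Qed.

Lemma at_right_0_intro (P : R -> Prop) d : 0 < d -> (forall t, 0 < t < d -> P t) -> Fa P.
Proof.
  intros Hd H. exists (mkposreal d Hd). intros y Hy Hy0. apply ball_R in Hy. simpl in Hy.
  apply H. apply Rabs_def2 in Hy. unfold minus, plus, opp in Hy; simpl in Hy. lra.
Qed.

Lemma Dom_int b : 0 < b -> is_RInt_gen (Dom b) Fa Fb (/ b).
Proof.
  intros Hb.
  assert (H : is_RInt_gen (Derive (hD b)) Fa Fb (0 - - / b)).
  { apply is_RInt_gen_Derive.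
    - eapply filter_imp; [|apply FP_pos]. intros [a c] [[Ha _] Hc] x Hx. simpl in *.
      eexists. apply hD_derive; auto. assert (0 < Rmin a c) by (apply Rmin_glb_lt; lra). lra.
    - eapply filter_imp; [|apply FP_pos]. intros [a c] [[Ha _] Hc] x Hx. simpl in *.
      assert (0 < Rmin a c) by (apply Rmin_glb_lt; lra).
      apply continuous_ext_loc with (Dom b).
      + apply locally_interval with 0 p_infty. simpl; lra. simpl; auto.
        intros y Hy _. symmetry. apply is_derive_unique, hD_derive; auto.
      + apply Dom_cont; auto; lra.
    - apply filterlim_locally. intros eps.
      assert (Hbe : 0 < b * eps) by (destruct eps; simpl; nra).
      apply at_right_0_intro with (exp (ln (b * eps) / b)). apply exp_pos.
      intros t [Ht1 Ht2]. apply ball_R. unfold hD.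
      assert (ln t < ln (b * eps) / b).
      { rewrite <- (ln_exp (ln (b * eps) / b)). apply ln_increasing; auto. }
      assert (b * ln t < ln (b * eps)).
      { apply Rmult_lt_reg_r with (/ b). apply Rinv_0_lt_compat; auto.
        replace (b * ln t * / b) with (ln t) by (field; lra). auto. }
      assert (exp (b * ln t) < b * eps).
      { rewrite <- (exp_ln (b * eps)) by auto. apply exp_increasing; auto. }
      set (p := exp (b * ln t)) in *. assert (0 < p) by apply exp_pos.
      replace (- / (b * (1 + p)) - - / b) with (p / (b * (1 + p))) by (field; lra).
      rewrite Rabs_right.
      + apply Rle_lt_trans with (p / b).
        * unfold Rdiv. apply Rmult_le_compat_l. lra.
          apply Rinv_le_contravar. lra. nra.
        * apply Rmult_lt_reg_r with b; auto. replace (p / b * b) with p by (field; lra).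
          lra.
      + apply Rle_ge. apply Rmult_le_pos. lra. apply Rlt_le, Rinv_0_lt_compat. nra.
    - apply filterlim_locally. intros eps.
      assert (Hbe : 0 < b * eps) by (destruct eps; simpl; nra).
      exists (exp (ln (/ (b * eps)) / b)). intros t Ht. apply ball_R. unfold hD.
      assert (Ht0 : 0 < t) by (pose proof (exp_pos (ln (/ (b * eps)) / b)); lra).
      assert (ln (/ (b * eps)) / b < ln t).
      { rewrite <- (ln_exp (ln (/ (b * eps)) / b)). apply ln_increasing; auto. apply exp_pos. }
      assert (ln (/ (b * eps)) < b * ln t).
      { apply Rmult_lt_reg_r with (/ b). apply Rinv_0_lt_compat; auto.
        replace (b * ln t * / b) with (ln t) by (field; lra). auto. }
      assert (/ (b * eps) < exp (b * ln t)).
      { rewrite <- (exp_ln (/ (b * eps))) by (apply Rinv_0_lt_compat; auto). apply exp_increasing; auto. }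
      set (p := exp (b * ln t)) in *. assert (0 < p) by apply exp_pos.
      replace (- / (b * (1 + p)) - 0) with (- / (b * (1 + p))) by ring.
      rewrite Rabs_Ropp, Rabs_right.
      + apply Rle_lt_trans with (/ (b * p)).
        * apply Rinv_le_contravar. nra. nra.
        * apply Rmult_lt_reg_r with (b * p). nra. rewrite Rinv_l by nra.
          apply Rmult_lt_reg_r with (/ (b * eps)). apply Rinv_0_lt_compat; auto.
          replace (eps * (b * p) * / (b * eps)) with p by (field; destruct eps; simpl; lra).
          lra.
      + apply Rle_ge, Rlt_le, Rinv_0_lt_compat. nra. }
  replace (/ b) with (0 - - / b) by ring.
  eapply is_RInt_gen_ext; [|exact H].
  eapply filter_imp; [|apply FP_pos]. intros [a c] [[Ha _] Hc] x Hx. simpl in *.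
  assert (0 < Rmin a c) by (apply Rmin_glb_lt; lra).
  apply is_derive_unique, hD_derive; auto; lra.
Qed.

Definition gf (n : nat) (x t : R) : R := exp ((x - 1) * ln t) * ln t ^ n * exp (- t).
Definition Ig (n : nat) (x : R) : R := RInt_gen (gf n x) Fa Fb.

Lemma RG_scal (f : R -> R) c l : is_RInt_gen f Fa Fb l -> is_RInt_gen (fun t => c * f t) Fa Fb (c * l).
Proof. intros H. exact (@is_RInt_gen_scal R_NormedModule Fa Fb _ _ f c l H). Qed.
Lemma RG_plus (f g : R -> R) l1 l2 : is_RInt_gen f Fa Fb l1 -> is_RInt_gen g Fa Fb l2 ->
  is_RInt_gen (fun t => f t + g t) Fa Fb (l1 + l2).
Proof. intros H1 H2. exact (@is_RInt_gen_plus R_NormedModule Fa Fb _ _ f g l1 l2 H1 H2). Qed.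
Lemma RG_minus (f g : R -> R) l1 l2 : is_RInt_gen f Fa Fb l1 -> is_RInt_gen g Fa Fb l2 ->
  is_RInt_gen (fun t => f t - g t) Fa Fb (l1 - l2).
Proof. intros H1 H2. exact (@is_RInt_gen_minus R_NormedModule Fa Fb _ _ f g l1 l2 H1 H2). Qed.
Lemma RG_correct (f : R -> R) : ex_RInt_gen f Fa Fb -> is_RInt_gen f Fa Fb (RInt_gen f Fa Fb).
Proof. intros H. exact (@RInt_gen_correct R_CompleteNormedModule Fa Fb _ _ f H). Qed.
Lemma RG_unique (f : R -> R) l : is_RInt_gen f Fa Fb l -> RInt_gen f Fa Fb = l.
Proof. intros H. exact (@is_RInt_gen_unique R_CompleteNormedModule Fa Fb _ _ f l H). Qed.
Lemma RG_norm (f g : R -> R) lf lg : (forall t, 0 < t -> Rabs (f t) <= g t) ->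
  is_RInt_gen f Fa Fb lf -> is_RInt_gen g Fa Fb lg -> Rabs lf <= lg.
Proof.
  intros Hb H1 H2.
  apply (@RInt_gen_norm R_CompleteNormedModule Fa Fb _ _ f g lf lg); auto.
  - eapply filter_imp; [|apply FP_pos]. intros [a b] H; simpl in *; lra.
  - eapply filter_imp; [|apply FP_pos]. intros [a b] H x Hx; simpl in *. apply Hb. lra.
Qed.

Lemma gf_cont n x t : 0 < t -> continuous (gf n x) t.
Proof.
  intros Ht. apply (@ex_derive_continuous R_AbsRing R_NormedModule). unfold gf.
  auto_derive. repeat split; auto.
Qed.

Lemma gf_abs n x t : Rabs (gf n x t) = exp ((x - 1) * ln t) * Rabs (ln t) ^ n * exp (- t).
Proof.
  unfold gf. rewrite !Rabs_mult, <- RPow_abs.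
  rewrite (Rabs_right (exp _)) by (apply Rle_ge, Rlt_le, exp_pos).
  rewrite (Rabs_right (exp (- t))) by (apply Rle_ge, Rlt_le, exp_pos). auto.
Qed.

Lemma gf_ex n x : 0 < x -> ex_RInt_gen (gf n x) Fa Fb.
Proof.
  intros Hx. destruct (Dom_bound x n Hx) as [C [HC HB]].
  apply RInt_gen_cmp with (fun t => C * Dom (x / 2) t) (C * / (x / 2)).
  - apply gf_cont.
  - intros t Ht. apply (@continuous_mult R_UniformSpace R_AbsRing (fun _ => C)).
    apply continuous_const. apply Dom_cont; auto; lra.
  - intros t Ht. rewrite gf_abs. apply HB; auto.
  - apply RG_scal, Dom_int. lra.
Qed.

Lemma is_derive_quad (F : R -> R) x L d K : 0 < d ->
  (forall h, Rabs h < d -> Rabs (F (x + h) - F x - h * L) <= K * h ^ 2) -> is_derive F x L.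
Proof.
  intros Hd HF. apply is_derive_Reals. intros eps Heps.
  assert (HK : 0 <= K).
  { specialize (HF (d / 2)). rewrite Rabs_right in HF by lra.
    assert (0 < (d/2)^2) by (apply pow_lt; lra).
    pose proof (Rabs_pos (F (x + d / 2) - F x - d / 2 * L)). 
    assert (HF' : Rabs (F (x + d / 2) - F x - d / 2 * L) <= K * (d / 2) ^ 2) by (apply HF; lra).
    nra. }
  assert (Hd' : 0 < Rmin d (eps / (K + 1))).
  { apply Rmin_glb_lt; auto. apply Rdiv_lt_0_compat; lra. }
  exists (mkposreal _ Hd'). simpl. intros h Hh0 Hh.
  assert (Hh1 : Rabs h < d) by (eapply Rlt_le_trans; [exact Hh| apply Rmin_l]).
  assert (Hh2 : Rabs h < eps / (K + 1)) by (eapply Rlt_le_trans; [exact Hh| apply Rmin_r]).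
  specialize (HF h Hh1).
  assert (Ha : 0 < Rabs h) by (apply Rabs_pos_lt; auto).
  replace ((F (x + h) - F x) / h - L) with ((F (x + h) - F x - h * L) / h) by (field; auto).
  unfold Rdiv. rewrite Rabs_mult, Rabs_inv.
  apply Rle_lt_trans with (K * h ^ 2 * / Rabs h).
  apply Rmult_le_compat_r. apply Rlt_le, Rinv_0_lt_compat; auto. auto.
  replace (K * h ^ 2 * / Rabs h) with (K * Rabs h).
  - apply Rle_lt_trans with ((K + 1) * Rabs h). nra.
    apply Rmult_lt_reg_l with (/ (K + 1)). apply Rinv_0_lt_compat; lra.
    rewrite <- Rmult_assoc, Rinv_l, Rmult_1_l by lra.
    unfold Rdiv in Hh2. lra.
  - rewrite <- (pow2_abs h). field. lra.
Qed.

Lemma gf_remainder n x h t : 0 < t -> Rabs h <= x / 2 ->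
  Rabs (gf n (x + h) t - gf n x t - h * gf (S n) x t) <=
  h ^ 2 * (exp ((x / 2 - 1) * ln t) * Rabs (ln t) ^ (n + 2) * exp (- t)
         + exp ((3 * x / 2 - 1) * ln t) * Rabs (ln t) ^ (n + 2) * exp (- t)).
Proof.
  intros Ht Hh. set (L := ln t).
  assert (E : gf n (x + h) t - gf n x t - h * gf (S n) x t
             = exp ((x - 1) * L) * L ^ n * exp (- t) * (exp (h * L) - 1 - h * L)).
  { unfold gf. fold L. replace ((x + h - 1) * L) with ((x - 1) * L + h * L) by ring.
    rewrite exp_plus. simpl. ring. }
  rewrite E. pose proof (expm1_bound (h * L)) as [B1 B2].
  rewrite Rabs_mult, (Rabs_right (exp _ - _ - _)) by lra.
  rewrite !Rabs_mult, <- RPow_abs.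
  rewrite (Rabs_right (exp ((x - 1) * L))) by (apply Rle_ge, Rlt_le, exp_pos).
  rewrite (Rabs_right (exp (- t))) by (apply Rle_ge, Rlt_le, exp_pos).
  assert (Hab : exp (Rabs (h * L)) <= exp (x / 2 * L) + exp (- (x / 2 * L))).
  { rewrite Rabs_mult. pose proof (exp_pos (x / 2 * L)). pose proof (exp_pos (- (x / 2 * L))).
    destruct (Rle_dec 0 L).
    - rewrite (Rabs_right L) by lra. assert (exp (Rabs h * L) <= exp (x / 2 * L)).
      { apply exp_le_mono. apply Rmult_le_compat_r; lra. } lra.
    - rewrite (Rabs_left L) by lra. assert (exp (Rabs h * - L) <= exp (- (x / 2 * L))).
      { apply exp_le_mono. replace (- (x / 2 * L)) with (x / 2 * - L) by ring.
        apply Rmult_le_compat_r; lra. } lra. }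
  assert (E1 : exp ((x / 2 - 1) * L) = exp ((x - 1) * L) * exp (- (x / 2 * L))).
  { rewrite <- exp_plus. f_equal. field. }
  assert (E2 : exp ((3 * x / 2 - 1) * L) = exp ((x - 1) * L) * exp (x / 2 * L)).
  { rewrite <- exp_plus. f_equal. field. }
  rewrite E1, E2.
  assert (E3 : Rabs L ^ (n + 2) = Rabs L ^ n * L ^ 2).
  { rewrite pow_add. f_equal. apply pow2_abs. }
  rewrite E3.
  set (P := exp ((x - 1) * L) * Rabs L ^ n * exp (- t)).
  assert (HP : 0 <= P).
  { unfold P. apply Rmult_le_pos; [apply Rmult_le_pos|]; try (apply Rlt_le, exp_pos).
    apply pow_le, Rabs_pos. }
  replace (exp ((x - 1) * L) * Rabs L ^ n * exp (- t) * (exp (h * L) - 1 - h * L))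
    with (P * (exp (h * L) - 1 - h * L)) by (unfold P; ring).
  apply Rle_trans with (P * ((h * L) ^ 2 * exp (Rabs (h * L)))).
  apply Rmult_le_compat_l; auto.
  replace (h ^ 2 * (exp ((x - 1) * L) * exp (- (x / 2 * L)) * (Rabs L ^ n * L ^ 2) * exp (- t) +
     exp ((x - 1) * L) * exp (x / 2 * L) * (Rabs L ^ n * L ^ 2) * exp (- t)))
    with (P * ((h * L) ^ 2 * (exp (x / 2 * L) + exp (- (x / 2 * L))))) by (unfold P; ring).
  apply Rmult_le_compat_l; auto. apply Rmult_le_compat_l; auto.
  apply pow2_ge_0.
Qed.

Lemma Ig_derive n x : 0 < x -> is_derive (Ig n) x (Ig (S n) x).
Proof.
  intros Hx.
  destruct (Dom_bound (x / 2) (n + 2) ltac:(lra)) as [C1 [HC1 HB1]].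
  destruct (Dom_bound (3 * x / 2) (n + 2) ltac:(lra)) as [C2 [HC2 HB2]].
  set (K := C1 * / (x / 2 / 2) + C2 * / (3 * x / 2 / 2)).
  apply is_derive_quad with (x / 2) K. lra.
  intros h Hh.
  assert (Hxh : 0 < x + h) by (apply Rabs_def2 in Hh; lra).
  set (r := fun t => gf n (x + h) t - gf n x t - h * gf (S n) x t).
  assert (Hr : is_RInt_gen r Fa Fb (Ig n (x + h) - Ig n x - h * Ig (S n) x)).
  { apply RG_minus. apply RG_minus; apply RG_correct, gf_ex; auto.
    apply RG_scal. apply RG_correct, gf_ex; auto. }
  assert (Hd : is_RInt_gen (fun t => h ^ 2 * (C1 * Dom (x / 2 / 2) t + C2 * Dom (3 * x / 2 / 2) t))
                 Fa Fb (h ^ 2 * K)).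
  { apply RG_scal. apply RG_plus; apply RG_scal, Dom_int; lra. }
  rewrite (Rmult_comm K).
  eapply RG_norm; [|exact Hr|exact Hd].
  intros t Ht. unfold r. eapply Rle_trans. apply gf_remainder; auto. lra.
  apply Rmult_le_compat_l. apply pow2_ge_0.
  apply Rplus_le_compat. apply HB1; auto. apply HB2; auto.
Qed.


Lemma Gamma_pos_Ig x : 0 < x -> Gamma_pos x = Ig 0 x.
Proof.
  intros Hx. unfold Gamma_pos, Ig. symmetry.
  apply (@RInt_gen_ext_eq R_CompleteNormedModule Fa Fb _ _).
  - intros t. unfold gf, Rpower. simpl. ring.
  - apply gf_ex; auto.
Qed.

Lemma Derive_n_Gamma_pos n x : 0 < x -> Derive_n Gamma_pos n x = Ig n x.
Proof.
  revert x. induction n; intros x Hx.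
  - simpl. apply Gamma_pos_Ig; auto.
  - simpl. rewrite (Derive_ext_loc _ (Ig n)).
    + apply is_derive_unique, Ig_derive; auto.
    + apply locally_interval with 0 p_infty; simpl; auto; intros y Hy _; apply IHn; auto.
Qed.

Lemma Gamma_pos_smooth n x : 0 < x -> ex_derive (Derive_n Gamma_pos n) x.
Proof.
  intros Hx. apply ex_derive_ext_loc with (Ig n).
  - apply locally_interval with 0 p_infty; simpl; auto; intros y Hy _.
    symmetry. apply Derive_n_Gamma_pos; auto.
  - eexists. apply Ig_derive; auto.
Qed.

Definition hF (x t : R) : R := - (exp (x * ln t) * exp (- t)).

Lemma hF_derive x t : 0 < t -> is_derive (hF x) t (gf 0 (x + 1) t - x * gf 0 x t).
Proof.
  intros Ht. unfold hF, gf. auto_derive. auto.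
  rewrite (exp_ln_shift x t Ht). replace (x + 1 - 1) with x by ring. field. lra.
Qed.

Lemma Gamma_pos_FE x : 0 < x -> Gamma_pos (x + 1) = x * Gamma_pos x.
Proof.
  intros Hx. rewrite !Gamma_pos_Ig by lra.
  assert (H1 : is_RInt_gen (fun t => gf 0 (x + 1) t - x * gf 0 x t) Fa Fb (Ig 0 (x + 1) - x * Ig 0 x)).
  { apply RG_minus. apply RG_correct, gf_ex; lra. apply RG_scal, RG_correct, gf_ex; lra. }
  assert (H2 : is_RInt_gen (Derive (hF x)) Fa Fb (0 - 0)).
  { apply is_RInt_gen_Derive.
    - eapply filter_imp; [|apply FP_pos]. intros [a c] [[Ha _] Hc] y Hy. simpl in *.
      eexists. apply hF_derive. assert (0 < Rmin a c) by (apply Rmin_glb_lt; lra). lra.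
    - eapply filter_imp; [|apply FP_pos]. intros [a c] [[Ha _] Hc] y Hy. simpl in *.
      assert (0 < Rmin a c) by (apply Rmin_glb_lt; lra).
      apply continuous_ext_loc with (fun t => gf 0 (x + 1) t - x * gf 0 x t).
      + apply locally_interval with 0 p_infty. simpl; lra. simpl; auto.
        intros z Hz _. symmetry. apply is_derive_unique, hF_derive; auto.
      + apply (@ex_derive_continuous R_AbsRing R_NormedModule). unfold gf.
        auto_derive. repeat split; lra.
    - apply filterlim_locally. intros eps.
      apply at_right_0_intro with (Rmin 1 (exp (ln eps / x))).
      apply Rmin_glb_lt. lra. apply exp_pos.
      intros t [Ht1 Ht2]. apply ball_R. unfold hF.
      assert (t < exp (ln eps / x)) by (eapply Rlt_le_trans; [exact Ht2|apply Rmin_r]).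
      assert (ln t < ln eps / x).
      { rewrite <- (ln_exp (ln eps / x)). apply ln_increasing; auto. }
      assert (x * ln t < ln eps).
      { apply Rmult_lt_reg_r with (/ x). apply Rinv_0_lt_compat; auto.
        replace (x * ln t * / x) with (ln t) by (field; lra). auto. }
      assert (exp (x * ln t) < eps).
      { rewrite <- (exp_ln eps) by (destruct eps; auto). apply exp_increasing; auto. }
      assert (exp (- t) <= 1). { rewrite <- exp_0. apply exp_le_mono. lra. }
      pose proof (exp_pos (x * ln t)). pose proof (exp_pos (- t)).
      rewrite Rminus_0_r, Rabs_Ropp, Rabs_right by (apply Rle_ge; nra). nra.
    - apply filterlim_locally. intros eps.
      destruct (bound_pos (x + 1) 0) as [K HK].
      assert (HK0 : 0 <= K).
      { eapply Rle_trans; [|apply (HK 0); lra]. simpl. rewrite Rmult_1_r.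
        pose proof (exp_pos ((x+1)*0)). pose proof (exp_pos (- exp 0)). nra. }
      exists (Rmax 1 (K / eps)). intros t Ht. apply ball_R. unfold hF.
      assert (Ht1 : 1 < t) by (eapply Rle_lt_trans; [apply Rmax_l|exact Ht]).
      assert (Ht2 : K / eps < t) by (eapply Rle_lt_trans; [apply Rmax_r|exact Ht]).
      assert (HL : 0 <= ln t) by (rewrite <- ln_1; apply ln_le; lra).
      specialize (HK (ln t) HL). rewrite exp_ln in HK by lra. simpl in HK.
      rewrite Rmult_1_r in HK.
      assert (E : exp ((x + 1) * ln t) = exp (x * ln t) * t).
      { replace ((x + 1) * ln t) with (x * ln t + ln t) by ring. rewrite exp_plus, exp_ln; lra. }
      rewrite E in HK.
      pose proof (exp_pos (x * ln t)). pose proof (exp_pos (- t)).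
      rewrite Rminus_0_r, Rabs_Ropp, Rabs_right by (apply Rle_ge; nra).
      assert (K < eps * t).
      { destruct eps as [e He]; simpl in *. apply Rmult_lt_reg_r with (/ e).
        apply Rinv_0_lt_compat; auto. replace (e * t * / e) with t by (field; lra). auto. }
      assert (exp (x * ln t) * exp (- t) * t < eps * t) by nra.
      nra. }
  assert (H3 : is_RInt_gen (fun t => gf 0 (x + 1) t - x * gf 0 x t) Fa Fb (0 - 0)).
  { eapply is_RInt_gen_ext; [|exact H2].
    eapply filter_imp; [|apply FP_pos]. intros [a c] [[Ha _] Hc] y Hy. simpl in *.
    assert (0 < Rmin a c) by (apply Rmin_glb_lt; lra).
    apply is_derive_unique, hF_derive; lra. }
  apply RG_unique in H1. apply RG_unique in H3. lra.
Qed.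

Lemma Gamma_eq_pos x : 0 < x -> Gamma x = Gamma_pos x.
Proof.
  intros Hx. unfold Gamma.
  assert (up (- x) <= 0)%Z.
  { destruct (archimed (- x)) as [H1 H2].
    apply Z.lt_succ_r. apply lt_IZR. rewrite succ_IZR. lra. }
  replace (Z.to_nat (up (- x))) with O by lia. simpl. rewrite Rplus_0_r.
  unfold rising. simpl. field.
Qed.

Lemma isd_plus (f g : R -> R) x df dg : is_derive f x df -> is_derive g x dg ->
  is_derive (fun y => f y + g y) x (df + dg).
Proof. intros. exact (@is_derive_plus R_AbsRing R_NormedModule f g x df dg H H0). Qed.

Lemma isd_mult (f g : R -> R) x df dg : is_derive f x df -> is_derive g x dg ->
  is_derive (fun y => f y * g y) x (df * g x + f x * dg).
Proof. intros. exact (@is_derive_mult R_AbsRing f g x df dg H H0 Rmult_comm). Qed.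

Definition Sm (a b : R) (f : R -> R) := forall n x, a < x < b -> ex_derive (Derive_n f n) x.
Definition cf (f : R -> R) (l : nat) (x : R) := Derive_n f l x / INR (fact l).

Lemma Sm_ext a b f g : (forall x, f x = g x) -> Sm a b f -> Sm a b g.
Proof.
  intros E H n x Hx. apply ex_derive_ext with (Derive_n f n).
  intros; apply Derive_n_ext; auto. apply H; auto.
Qed.

Lemma cf_ext f g l x : (forall y, f y = g y) -> cf f l x = cf g l x.
Proof. intros. unfold cf. rewrite (Derive_n_ext f g); auto. Qed.

Lemma cf_derive a b f l x : Sm a b f -> a < x < b ->
  is_derive (cf f l) x (INR (S l) * cf f (S l) x).
Proof.
  intros Hf Hx. unfold cf.
  assert (H : is_derive (Derive_n f l) x (Derive_n f (S l) x)).
  { simpl. apply Derive_correct. apply Hf; auto. }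
  replace (INR (S l) * (Derive_n f (S l) x / INR (fact (S l))))
    with (Derive_n f (S l) x / INR (fact l)).
  - apply is_derive_ext with (fun y => / INR (fact l) * Derive_n f l y).
    intros t; unfold Rdiv; apply Rmult_comm.
    replace (Derive_n f (S l) x / INR (fact l)) with (/ INR (fact l) * Derive_n f (S l) x) by (unfold Rdiv; ring).
    apply is_derive_scal; auto.
  - rewrite fact_simpl, mult_INR. pose proof (INR_fact_lt_0 l).
    assert (0 < INR (S l)) by (apply lt_0_INR; lia). field. lra.
Qed.

Lemma isd_sum (F : nat -> R -> R) (F' : nat -> R) x m :
  (forall l, (l <= m)%nat -> is_derive (F l) x (F' l)) ->
  is_derive (fun y => sum_f_R0 (fun l => F l y) m) x (sum_f_R0 F' m).
Proof.
  induction m; intros H; simpl.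
  - apply H; auto.
  - apply isd_plus. apply IHm. intros; apply H; lia. apply H; auto.
Qed.

Lemma leibniz_comb (A B : nat -> R) n :
  sum_f_R0 (fun l => INR (S l) * A (S l) * B (n - l)%nat + A l * (INR (S (n - l)) * B (S (n - l)))) n
  = INR (S n) * sum_f_R0 (fun l => A l * B (S n - l)%nat) (S n).
Proof.
  set (T := fun l => A l * B (S n - l)%nat).
  rewrite plus_sum.
  assert (E1 : sum_f_R0 (fun l => INR (S l) * A (S l) * B (n - l)%nat) n
               = sum_f_R0 (fun l => INR l * T l) (S n)).
  { rewrite (decomp_sum (fun l => INR l * T l) (S n)) by lia. simpl pred.
    rewrite Rmult_0_l, Rplus_0_l. apply sum_eq. intros i Hi. unfold T.
    replace (S n - S i)%nat with (n - i)%nat by lia. ring. }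
  assert (E2 : sum_f_R0 (fun l => A l * (INR (S (n - l)) * B (S (n - l)))) n
               = sum_f_R0 (fun l => (INR (S n) - INR l) * T l) (S n)).
  { rewrite tech5. rewrite Rminus_diag, Rmult_0_l, Rplus_0_r.
    apply sum_eq. intros i Hi. unfold T.
    replace (S n - i)%nat with (S (n - i)) by lia.
    rewrite (S_INR (n - i)), minus_INR, (S_INR n) by auto. ring. }
  rewrite E1, E2, <- plus_sum, scal_sum. apply sum_eq. intros i Hi. ring.
Qed.

Lemma leibniz a b f g : Sm a b f -> Sm a b g ->
  forall n x, a < x < b ->
  Derive_n (fun y => f y * g y) n x = INR (fact n) * sum_f_R0 (fun l => cf f l x * cf g (n - l) x) n.
Proof.
  intros Hf Hg n. induction n; intros x Hx.
  - simpl. unfold cf. simpl. field.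
  - simpl Derive_n at 1.
    rewrite (Derive_ext_loc _ (fun y => INR (fact n) * sum_f_R0 (fun l => cf f l y * cf g (n - l) y) n)).
    2:{ apply locally_interval with a b; simpl; try lra; intros; apply IHn; lra. }
    apply is_derive_unique.
    replace (INR (fact (S n)) * sum_f_R0 (fun l => cf f l x * cf g (S n - l) x) (S n))
      with (INR (fact n) * sum_f_R0 (fun l => INR (S l) * cf f (S l) x * cf g (n - l)%nat x
               + cf f l x * (INR (S (n - l)) * cf g (S (n - l)) x)) n).
    + apply is_derive_scal. apply isd_sum. intros l Hl.
      replace (INR (S l) * cf f (S l) x * cf g (n - l) x) with ((INR (S l) * cf f (S l) x) * cf g (n - l) x) by ring.
      apply isd_mult; eapply cf_derive; eauto.
    + rewrite (leibniz_comb (fun l => cf f l x) (fun l => cf g l x)).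
      rewrite fact_simpl, mult_INR. ring.
Qed.

Lemma Sm_mult a b f g : Sm a b f -> Sm a b g -> Sm a b (fun y => f y * g y).
Proof.
  intros Hf Hg n x Hx.
  apply ex_derive_ext_loc with (fun y => INR (fact n) * sum_f_R0 (fun l => cf f l y * cf g (n - l) y) n).
  - apply locally_interval with a b; simpl; try lra; intros; symmetry; apply (leibniz a b); auto; lra.
  - eexists. apply is_derive_scal. apply isd_sum. intros l Hl.
    apply isd_mult; eapply cf_derive; eauto.
Qed.

Lemma cf_mult a b f g n x : Sm a b f -> Sm a b g -> a < x < b ->
  cf (fun y => f y * g y) n x = sum_f_R0 (fun l => cf f l x * cf g (n - l) x) n.
Proof.
  intros Hf Hg Hx. unfold cf at 1. rewrite (leibniz a b f g Hf Hg n x Hx).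
  pose proof (INR_fact_lt_0 n). field. lra.
Qed.

Definition Pf (m : nat) (fs : nat -> R -> R) (y : R) : R := prodR (map (fun i => fs i y) (seq 0 m)).
Definition conv (m : nat) (c : nat -> nat -> R) (j : nat) : R :=
  sumR (map (fun l => prodR (map (fun i => c i (nth i l O)) (seq 0 m))) (compositions m j)).

Lemma sumR_app l1 l2 : sumR (l1 ++ l2) = sumR l1 + sumR l2.
Proof. induction l1; simpl. ring. rewrite IHl1. ring. Qed.

Lemma sumR_flat_map {A B} (F : B -> R) (g : A -> list B) s :
  sumR (map F (flat_map g s)) = sumR (map (fun a => sumR (map F (g a))) s).
Proof. induction s; simpl. auto. rewrite map_app, sumR_app, IHs. auto. Qed.

Lemma sumR_scal {A} (c : R) (F : A -> R) s : sumR (map (fun x => c * F x) s) = c * sumR (map F s).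
Proof. induction s; simpl. ring. rewrite IHs. ring. Qed.

Lemma sumR_seq f j : sumR (map f (seq 0 (S j))) = sum_f_R0 f j.
Proof.
  induction j. simpl. ring.
  rewrite seq_S, map_app, sumR_app, IHj. simpl. ring.
Qed.

Lemma seq0S m : seq 0 (S m) = 0%nat :: map S (seq 0 m).
Proof. simpl. rewrite seq_shift. auto. Qed.

Lemma Pf_S m fs y : Pf (S m) fs y = fs O y * Pf m (fun i => fs (S i)) y.
Proof. unfold Pf. rewrite seq0S. simpl. rewrite map_map. auto. Qed.

Lemma conv_S m c j : conv (S m) c j = sum_f_R0 (fun a => c O a * conv m (fun i => c (S i)) (j - a)%nat) j.
Proof.
  unfold conv. change (compositions (S m) j) with (flat_map (fun a => map (cons a) (compositions m (j - a))) (seq 0 (S j))). rewrite sumR_flat_map, <- sumR_seq. f_equal. apply map_ext.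
  intros a. rewrite map_map, <- sumR_scal. f_equal. apply map_ext. intros l.
  rewrite seq0S. simpl. rewrite map_map. auto.
Qed.

Lemma Sm_const a b c : Sm a b (fun _ => c).
Proof.
  intros n x Hx. destruct n.
  - simpl. eexists. apply (@is_derive_const R_AbsRing R_NormedModule).
  - apply ex_derive_ext with (fun _ => 0). intros t. symmetry. apply Derive_n_const.
    eexists. apply (@is_derive_const R_AbsRing R_NormedModule).
Qed.

Lemma prod_cf a b m : forall fs, (forall i, (i < m)%nat -> Sm a b (fs i)) ->
  Sm a b (Pf m fs) /\ forall j x, a < x < b -> cf (Pf m fs) j x = conv m (fun i l => cf (fs i) l x) j.
Proof.
  induction m; intros fs Hfs.
  - split.
    + apply Sm_ext with (fun _ => 1). intros; reflexivity. apply Sm_const.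
    + intros j x Hx. unfold cf, conv. destruct j.
      * simpl. unfold Pf. simpl. field.
      * rewrite (Derive_n_ext _ (fun _ => 1)) by (intros; reflexivity).
        rewrite Derive_n_const. simpl. unfold Rdiv. ring.
  - destruct (IHm (fun i => fs (S i))) as [H1 H2]. intros; apply Hfs; lia.
    assert (H0 : Sm a b (fs O)) by (apply Hfs; lia).
    split.
    + apply Sm_ext with (fun y => fs O y * Pf m (fun i => fs (S i)) y).
      intros; symmetry; apply Pf_S. apply Sm_mult; auto.
    + intros j x Hx. rewrite (cf_ext _ (fun y => fs O y * Pf m (fun i => fs (S i)) y)) by (intros; apply Pf_S).
      rewrite (cf_mult a b) by auto. rewrite conv_S. apply sum_eq. intros i Hi.
      rewrite H2 by auto. auto.
Qed.

Lemma inv_derive_n m n u : u < m -> Derive_n (fun v => / (m - v)) n u = INR (fact n) / (m - u) ^ (S n).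
Proof.
  revert u. induction n; intros u Hu.
  - simpl. field. lra.
  - simpl Derive_n at 1.
    rewrite (Derive_ext_loc _ (fun v => INR (fact n) / (m - v) ^ (S n))).
    2:{ apply locally_interval with m_infty m; simpl; auto; intros; apply IHn; auto. }
    apply is_derive_unique. auto_derive.
    + change ((m + - u) * (m + - u) ^ n) with ((m + - u) ^ (S n)). apply pow_nonzero. lra.
    + change (match n with 0%nat => 1 | S _ => INR n + 1 end) with (INR (S n)).
      rewrite fact_simpl, mult_INR. simpl pow. unfold Rminus.
      assert ((m + - u) ^ n <> 0) by (apply pow_nonzero; lra).
      field. split; auto; lra.
Qed.

Lemma Sm_inv m : 1 <= m -> Sm (- / 2) (/ 2) (fun v => / (m - v)).
Proof.
  intros Hm n x Hx. apply ex_derive_ext_loc with (fun v => INR (fact n) / (m - v) ^ (S n)).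
  - apply locally_interval with m_infty m; simpl; try lra; intros; symmetry; apply inv_derive_n; auto.
  - auto_derive. change ((m + - x) * (m + - x) ^ n) with ((m + - x) ^ (S n)). apply pow_nonzero. lra.
Qed.

Lemma Sm_Gp : Sm (- / 2) (/ 2) (fun u => Gamma_pos (u + 1)).
Proof.
  intros n x Hx. apply ex_derive_ext with (fun u => Derive_n Gamma_pos n (u + 1)).
  intros t; symmetry; apply Derive_n_comp_trans.
  apply (@ex_derive_comp R_AbsRing R_NormedModule (Derive_n Gamma_pos n) (fun u => u + 1)).
  apply Gamma_pos_smooth. lra.
  auto_derive. auto.
Qed.

Definition fs (k : nat) (i : nat) (u : R) : R :=
  if Nat.ltb i k then / (INR (k - i) - u) else Gamma_pos (u + 1).

Lemma Sm_fs k i : Sm (- / 2) (/ 2) (fs k i).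
Proof.
  unfold fs. destruct (Nat.ltb_spec i k).
  - apply Sm_inv. replace 1 with (INR 1) by auto. apply le_INR. lia.
  - apply Sm_Gp.
Qed.

Lemma cf_fs_lt k i l : (i < k)%nat -> cf (fs k i) l 0 = / INR (k - i) ^ (S l).
Proof.
  intros Hi. unfold cf, fs. rewrite (Derive_n_ext _ (fun v => / (INR (k - i) - v))).
  2:{ intros; destruct (Nat.ltb_spec i k); auto; lia. }
  assert (1 <= INR (k - i)) by (replace 1 with (INR 1) by auto; apply le_INR; lia).
  rewrite inv_derive_n by lra. rewrite Rminus_0_r.
  pose proof (INR_fact_lt_0 l). field. split; [apply pow_nonzero|]; lra.
Qed.

Lemma cf_fs_k k l : cf (fs k k) l 0 = Derive_n Gamma l 1 / INR (fact l).
Proof.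
  unfold cf, fs. rewrite (Derive_n_ext _ (fun u => Gamma_pos (u + 1))).
  2:{ intros; destruct (Nat.ltb_spec k k); auto; lia. }
  rewrite Derive_n_comp_trans, Rplus_0_l.
  rewrite (Derive_n_ext_loc Gamma Gamma_pos); auto.
  apply locally_interval with 0 p_infty; simpl; try lra; auto.
  intros; apply Gamma_eq_pos; auto.
Qed.

Lemma prodR_app l1 l2 : prodR (l1 ++ l2) = prodR l1 * prodR l2.
Proof. induction l1; simpl. ring. rewrite IHl1. ring. Qed.

Lemma conv_term k j : conv (S k) (fun i l => cf (fs k i) l 0) j = sumR (map (lemma3_term k) (compositions (S k) j)).
Proof.
  unfold conv. f_equal. apply map_ext. intros l.
  unfold lemma3_term. rewrite seq_S, map_app, prodR_app. simpl.
  rewrite cf_fs_k, Rmult_1_r, Rmult_comm. f_equal.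
  rewrite <- seq_shift, map_map. f_equal. apply map_ext_in. intros i Hi.
  apply in_seq in Hi. rewrite cf_fs_lt by lia.
  replace (k - S i + 1)%nat with (k - i)%nat by lia. replace (S i - 1)%nat with i by lia. auto.
Qed.

Definition psi (k : nat) (u : R) : R := (-1) ^ (k + 1) * Pf (S k) (fs k) u.

Lemma Sm_psi k : Sm (- / 2) (/ 2) (psi k).
Proof.
  apply Sm_mult. apply Sm_const.
  apply (prod_cf (- / 2) (/ 2) (S k) (fs k)). intros; apply Sm_fs.
Qed.

Lemma Dpsi0 k j : Derive_n (psi k) j 0 =
  (-1) ^ (k + 1) * INR (fact j) * sumR (map (lemma3_term k) (compositions (S k) j)).
Proof.
  unfold psi. rewrite Derive_n_scal_l.
  destruct (prod_cf (- / 2) (/ 2) (S k) (fs k)) as [_ H2]. intros; apply Sm_fs.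
  specialize (H2 j 0 ltac:(lra)). unfold cf at 1 in H2. rewrite conv_term in H2.
  rewrite <- H2. pose proof (INR_fact_lt_0 j). field. lra.
Qed.

Lemma prodR_neg (g : nat -> R) s : prodR (map (fun i => - g i) s) = (-1) ^ (length s) * prodR (map g s).
Proof. induction s; simpl. ring. rewrite IHs. ring. Qed.

Lemma prodR_inv (g : nat -> R) s : prodR (map (fun i => / g i) s) = / prodR (map g s).
Proof. induction s; simpl. rewrite Rinv_1; auto. rewrite IHs, Rinv_mult. auto. Qed.

Lemma prodR_pos (g : nat -> R) s : (forall i, In i s -> 0 < g i) -> 0 < prodR (map g s).
Proof.
  induction s; simpl; intros H. lra. apply Rmult_lt_0_compat. apply H; auto. apply IHs; auto.
Qed.

Definition PP (k : nat) (u : R) := prodR (map (fun i => INR (k - i) - u) (seq 0 k)).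

Lemma PP_pos k u : u < 1 -> 0 < PP k u.
Proof.
  intros Hu. apply prodR_pos. intros i Hi. apply in_seq in Hi.
  assert (1 <= INR (k - i)) by (replace 1 with (INR 1) by auto; apply le_INR; lia). lra.
Qed.

Lemma rising_eq k u : rising (u - INR k) k = (-1) ^ k * PP k u.
Proof.
  unfold rising, PP. change (fold_right Rmult 1 (map (fun i => u - INR k + INR i) (seq 0 k)))
    with (prodR (map (fun i => u - INR k + INR i) (seq 0 k))).
  rewrite <- (length_seq k 0) at 2. rewrite <- prodR_neg. f_equal. apply map_ext_in.
  intros i Hi. apply in_seq in Hi. rewrite minus_INR by lia. ring.
Qed.

Lemma Pf_eq k u : Pf (S k) (fs k) u = / PP k u * Gamma_pos (u + 1).
Proof.
  unfold Pf, PP. rewrite seq_S, map_app, prodR_app. simpl.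
  unfold fs at 2. rewrite Nat.ltb_irrefl, Rmult_1_r. f_equal.
  rewrite <- prodR_inv. f_equal. apply map_ext_in. intros i Hi. apply in_seq in Hi.
  unfold fs. destruct (Nat.ltb_spec i k); auto; lia.
Qed.

Lemma Gamma_shift k u : 0 < Rabs u < 1 -> Gamma (u - INR k) = Gamma_pos (u + 1) / (u * rising (u - INR k) k).
Proof.
  intros Hu. unfold Gamma. replace (- (u - INR k)) with (INR k - u) by ring.
  assert (HR : rising (u - INR k) k <> 0).
  { rewrite rising_eq. assert (u < 1) by (destruct Hu as [_ Hu1]; apply Rabs_def2 in Hu1; lra).
    pose proof (PP_pos k u H). apply Rmult_integral_contrapositive. split; [apply pow_nonzero; lra|lra]. }
  assert (Hu0 : u <> 0) by (intros E; rewrite E, Rabs_R0 in Hu; lra).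
  destruct (Rlt_dec 0 u) as [Hp|Hn].
  - rewrite Rabs_right in Hu by lra.
    replace (up (INR k - u)) with (Z.of_nat k).
    2:{ apply tech_up; rewrite <- INR_IZR_INZ; lra. }
    rewrite Nat2Z.id. replace (u - INR k + INR k) with u by ring.
    replace (u + 1) with (u + 1) by ring. rewrite Gamma_pos_FE by lra.
    field. split; auto.
  - rewrite Rabs_left in Hu by lra.
    replace (up (INR k - u)) with (Z.of_nat (S k)).
    2:{ apply tech_up; rewrite <- INR_IZR_INZ; rewrite S_INR; lra. }
    rewrite Nat2Z.id. replace (u - INR k + INR (S k)) with (u + 1) by (rewrite S_INR; ring).
    unfold rising at 1. rewrite seq_S, map_app.
    change (fold_right Rmult 1 (map (fun i => u - INR k + INR i) (seq 0 k) ++ map (fun i => u - INR k + INR i) [(0 + k)%nat]))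
      with (prodR (map (fun i => u - INR k + INR i) (seq 0 k) ++ map (fun i => u - INR k + INR i) [(0 + k)%nat])).
    rewrite prodR_app. simpl.
    change (prodR (map (fun i => u - INR k + INR i) (seq 0 k))) with (rising (u - INR k) k). field. split; auto.
Qed.

Lemma sign_cases k : (-1) ^ k = 1 \/ (-1) ^ k = -1.
Proof. induction k; simpl. auto. destruct IHk as [E|E]; rewrite E; [right|left]; ring. Qed.

Lemma f_eq k s : 0 < Rabs (s - (/ 2 + INR k)) < / 2 ->
  (s - / 2 - INR k) * Gamma (/ 2 - s) = psi k (/ 2 + INR k - s).
Proof.
  intros Hs. set (u := / 2 + INR k - s).
  assert (Hu : 0 < Rabs u < 1).
  { unfold u. replace (/ 2 + INR k - s) with (- (s - (/ 2 + INR k))) by ring.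
    rewrite Rabs_Ropp. lra. }
  replace (/ 2 - s) with (u - INR k) by (unfold u; ring).
  replace (s - / 2 - INR k) with (- u) by (unfold u; ring).
  rewrite Gamma_shift by auto. unfold psi. rewrite Pf_eq, rising_eq.
  assert (u < 1) by (destruct Hu as [_ Hu1]; apply Rabs_def2 in Hu1; lra).
  pose proof (PP_pos k u H).
  assert (Hu0 : u <> 0) by (intros E; rewrite E, Rabs_R0 in Hu; lra).
  rewrite Nat.add_1_r. simpl pow at 2.
  destruct (sign_cases k) as [E|E]; rewrite E; field; split; lra.
Qed.

Lemma Derive_n_psi_shift k j y s0 : Rabs (y - s0) < / 2 ->
  Derive_n (fun z => psi k (s0 - z)) j y = (-1) ^ j * Derive_n (psi k) j (- y + s0).
Proof.
  intros Hy.
  rewrite (Derive_n_ext _ (fun z => (fun w => psi k (w + s0)) (- z))) by (intros; f_equal; ring).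
  rewrite (Derive_n_comp_opp (fun w => psi k (w + s0))). rewrite Derive_n_comp_trans. auto.
  apply Rabs_def2 in Hy.
  apply locally_interval with (- / 2 - s0) (/ 2 - s0); simpl; try lra.
  intros w Hw1 Hw2 m Hm. destruct m. simpl; auto.
  simpl. apply ex_derive_ext with (fun w => Derive_n (psi k) m (w + s0)).
  intros t; symmetry; apply Derive_n_comp_trans.
  apply (@ex_derive_comp R_AbsRing R_NormedModule (Derive_n (psi k) m) (fun w => w + s0)).
  apply Sm_psi. lra. auto_derive. auto.
Qed.

Theorem lemma3 (k j : nat) (hj : (1 <= j)%nat) :
  is_lim (Derive_n (fun s => (s - / 2 - INR k) * Gamma (/ 2 - s)) j)
         (/ 2 + INR k) (lemma3_rhs k j).
Proof.
  set (s0 := / 2 + INR k).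
  set (g := fun s => (-1) ^ j * Derive_n (psi k) j (- s + s0)).
  assert (Hg : is_lim g s0 (g s0)).
  { apply is_lim_continuity. apply continuity_pt_filterlim.
    apply (@ex_derive_continuous R_AbsRing R_NormedModule). unfold g.
    apply ex_derive_scal.
    apply (@ex_derive_comp R_AbsRing R_NormedModule (Derive_n (psi k) j) (fun s => - s + s0)).
    replace (- s0 + s0) with 0 by ring. apply Sm_psi. lra.
    auto_derive. auto. }
  assert (Hv : g s0 = lemma3_rhs k j).
  { unfold g. replace (- s0 + s0) with 0 by ring. rewrite Dpsi0. unfold lemma3_rhs.
    assert (E : (-1) ^ (j + (k + 1)) = (-1) ^ (k + j - 1)).
    { replace (j + (k + 1))%nat with ((k + j - 1) + 2)%nat by lia. rewrite pow_add. simpl. ring. }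
    rewrite <- E, !pow_add. ring. }
  rewrite <- Hv.
  apply is_lim_ext_loc with g; auto.
  simpl. exists (mkposreal (/ 2) ltac:(lra)). intros y Hy Hne. simpl in Hy.
  apply ball_R in Hy. simpl in Hy.
  unfold g. symmetry.
  rewrite (Derive_n_ext_loc _ (fun z => psi k (s0 - z))).
  - apply Derive_n_psi_shift; auto.
  - assert (Hy' : Rabs (y - s0) < / 2) by exact Hy. apply Rabs_def2 in Hy.
    unfold minus, plus, opp in Hy; simpl in Hy.
    destruct (Rlt_dec y s0).
    + apply locally_interval with (s0 - / 2) s0; simpl; try lra.
      intros z Hz1 Hz2. apply f_eq. fold s0. split.
      apply Rabs_pos_lt; lra. apply Rabs_def1; lra.
    + apply locally_interval with s0 (s0 + / 2); simpl; try (destruct (Req_dec y s0); [congruence|]; lra).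
      intros z Hz1 Hz2. apply f_eq. fold s0. split.
      apply Rabs_pos_lt; lra. apply Rabs_def1; lra.
Qed.
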